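(* For $1\le\ell\le r$ let \[ F_\ell(n)=z_\ell^n\prod_{\nu=1}^{m_\ell}P_{\ell,\nu}(n)^{q_{\ell,\nu}}\prod_{j=1}^{h_\ell}\mathcal P_{\Omega_{\ell,j}}(n)^{e_{\ell,j}}, \] with $P_{\ell,\nu}\in\mathbb C[x]$, $z_\ell,q_{\ell,\nu}\in\mathbb C$, $e_{\ell,j}\in\mathbb Z_{\ge0}$ and words $\Omega_{\ell,j}$ in polynomial letters, where the polynomial factors are nonzero on the relevant positive integers and branches for all complex powers are fixed. Then for every positive integer $k$, \[ \sum_{n_r=1}^{k}\sum_{n_{r-1}=1}^{n_r}\cdots\sum_{n_1=1}^{n_2}\prod_{\ell=1}^{r}F_\ell(n_\ell)\in\operatorname{span}_{\mathbb C}\{\mathcal P_\Omega(k)\}_\Omega, \] where $\Omega$ ranges over words in polynomial letters.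
   Context: A polynomial letter is a triple $L=(\boldsymbol\rho,\sigma,\mathbf P)$ with $\boldsymbol\rho=(\rho_1,\ldots,\rho_t)\in\mathbb C^t$, $\sigma\in\mathbb C$, $\mathbf P=(P_1,\ldots,P_t)$, $P_\nu\in\mathbb C[x]$; its value at a positive integer $n$ is $L(n)=\sigma^n\prod_\nu P_\nu(n)^{-\rho_\nu}$ (branches fixed, polynomials nonzero on the relevant range). For a word $\Omega=(L_1,\ldots,L_d)$ of polynomial letters, $\mathcal P_\Omega(N)=\sum_{N\ge n_1>\cdots>n_d\ge1}\prod_jL_j(n_j)$, $\mathcal P_\emptyset(N)=1$. *)

(* Defs.v *)
From HB Require Import structures.
From mathcomp Require Import all_boot all_order all_algebra.
From mathcomp Require Import all_classical all_reals all_analysis.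
From mathcomp Require Import exp trigo.
From mathcomp Require Import complex.
From Stdlib Require List.
Set Implicit Arguments. Unset Strict Implicit. Unset Printing Implicit Defensive.
Import Order.TTheory GRing.Theory Num.Theory.
Local Open Scope ring_scope.
Local Open Scope complex_scope.

Section Defs.
Variable R : realType.
Local Notation C := R[i].

Definition expC (z : C) : C :=
  let: Complex a b := z in (expR a)%:C * (cos b +i* sin b).

Definition is_log_branch (Lg : C -> C) : Prop :=
  forall w : C, w != 0 -> expC (Lg w) = w.

Definition cpow (Lg : C -> C) (w q : C) : C := expC (q * Lg w).

(* A polynomial letter L = (rho, sigma, P): stored as sigma together with the
   list of pairs (rho_nu, P_nu), nu = 1..t. *)
Record letter := Letter { lsigma : C ; lfactors : seq (C * {poly C}) }.

Definition letter_val (Lg : C -> C) (L : letter) (n : nat) : C :=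
  lsigma L ^+ n * \prod_(rp <- lfactors L) cpow Lg (rp.2).[n%:R] (- rp.1).

Definition word := seq letter.

(* P_Omega(N) = sum_{N >= n_1 > ... > n_d >= 1} prod_j L_j(n_j), written as the
   nested sum  sum_{n_1=1}^{N} L_1(n_1) * P_{(L_2,...,L_d)}(n_1 - 1);  P_[](N) = 1. *)
Fixpoint PO (Lg : C -> C) (w : word) (N : nat) : C :=
  match w with
  | [::] => 1
  | L :: w' => \sum_(1 <= n < N.+1) letter_val Lg L n * PO Lg w' n.-1
  end.

Definition poly_nz (P : {poly C}) : Prop := forall n : nat, (0 < n)%N -> P.[n%:R] != 0.
Definition letter_adm (L : letter) : Prop :=
  forall rp, List.In rp (lfactors L) -> poly_nz rp.2.
Definition word_adm (w : word) : Prop := forall L, List.In L w -> letter_adm L.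

(* The data of one factor F_l:  z_l, the pairs (q_{l,nu}, P_{l,nu}), and the pairs
   (Omega_{l,j}, e_{l,j}). *)
Record sfactor := Factor {
  fz : C ;
  fpolys : seq (C * {poly C}) ;
  fwords : seq (word * nat) }.

Definition factor_val (Lg : C -> C) (F : sfactor) (n : nat) : C :=
  fz F ^+ n * \prod_(qp <- fpolys F) cpow Lg (qp.2).[n%:R] qp.1
            * \prod_(we <- fwords F) PO Lg we.1 n ^+ we.2.

Definition factor_adm (F : sfactor) : Prop :=
  (forall qp, List.In qp (fpolys F) -> poly_nz qp.2) /\
  (forall we, List.In we (fwords F) -> word_adm we.1).

Fixpoint nested_sum (Gs : seq (nat -> C)) (N : nat) : C :=
  match Gs with
  | [::] => 1
  | G :: Gs' => \sum_(1 <= n < N.+1) G n * nested_sum Gs' n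
  end.

(* sum_{n_r=1}^{k} sum_{n_{r-1}=1}^{n_r} ... sum_{n_1=1}^{n_2} prod_l F_l(n_l),
   for Fs = [:: F_1; ...; F_r] *)
Definition iterated_sum (Lg : C -> C) (Fs : seq sfactor) (k : nat) : C :=
  nested_sum (rev (map (factor_val Lg) Fs)) k.

End Defs.

(* Main.v *)
Require Import Defs.
From HB Require Import structures.
From mathcomp Require Import all_boot all_order all_algebra.
From mathcomp Require Import all_classical all_reals.
From mathcomp Require Import complex.
From mathcomp Require Import ring.
From Stdlib Require List.
Import GRing.Theory Num.Theory.
Local Open Scope ring_scope.

Lemma In_cat {T} {x : T} {s1 s2} : List.In x (s1 ++ s2) -> List.In x s1 \/ List.In x s2.
Proof. elim: s1 => [|y s IH] /=; first by right. case=> [->|/IH [h|h]]; auto. Qed.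

Lemma In_map' {T U} {f : T -> U} {y s} : List.In y (map f s) -> exists x, List.In x s /\ y = f x.
Proof.
elim: s => [|x s IH] //= [<-|/IH [z [h ->]]]; first by exists x; auto.
by exists z; auto.
Qed.

Lemma In_rev {T} {x : T} {s} : List.In x (rev s) -> List.In x s.
Proof.
elim: s => // y s IH; rewrite rev_cons -cats1 => h.
case: (In_cat h) => [/IH|[<-|[]]]; simpl; auto.
Qed.

Section H.
Variable R : realType.
Variable Lg : R[i] -> R[i].
Local Notation C := R[i].
Local Notation PO := (PO Lg).
Local Notation lv := (letter_val Lg).

Definition Sp (f : nat -> C) := exists cws : seq (C * word R),
  (forall cw, List.In cw cws -> word_adm cw.2) /\
  forall N, f N = \sum_(cw <- cws) cw.1 * PO cw.2 N.

Lemma Sp_ext {f g} : Sp f -> (forall N, f N = g N) -> Sp g.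
Proof. by move=> [cws [h1 h2]] e; exists cws; split => // N; rewrite -e. Qed.

Lemma Sp0 : Sp (fun _ => 0).
Proof. by exists [::]; split => // N; rewrite big_nil. Qed.

Lemma SpD {f g} : Sp f -> Sp g -> Sp (fun N => f N + g N).
Proof.
move=> [c1 [h1 e1]] [c2 [h2 e2]]; exists (c1 ++ c2); split.
  by move=> cw /In_cat [/h1|/h2].
by move=> N; rewrite big_cat e1 e2.
Qed.

Lemma SpZ c {f} : Sp f -> Sp (fun N => c * f N).
Proof.
move=> [c1 [h1 e1]]; exists (map (fun cw => (c * cw.1, cw.2)) c1); split.
  by move=> cw /In_map' [x [hx ->]]; exact: (h1 x hx).
by move=> N; rewrite big_map e1 mulr_sumr; apply: eq_bigr => i _; rewrite mulrA.
Qed.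

Lemma SpPO {w} : word_adm w -> Sp (PO w).
Proof.
move=> hw; exists [:: (1, w)]; split; first by move=> cw [<-|[]].
by move=> N; rewrite big_seq1 mul1r.
Qed.

Lemma adm_nil : word_adm (R:=R) [::].
Proof. by move=> ? []. Qed.

Lemma Sp1 : Sp (fun _ => 1).
Proof. by apply: (Sp_ext (SpPO adm_nil)). Qed.

Lemma Sp_ind (P : (nat -> C) -> Prop) :
  (forall f g, (forall N, f N = g N) -> P f -> P g) -> P (fun _ => 0) ->
  (forall f c w, word_adm w -> P f -> P (fun N => c * PO w N + f N)) ->
  forall f, Sp f -> P f.
Proof.
move=> Pext P0 Pstep f [cws [adm e]].
apply: (Pext _ _ (fun N => esym (e N))); move: adm; clear e.
elim: cws => [|[c w] cws IH] adm /=.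
  by apply: Pext P0 => N; rewrite big_nil.
apply: (Pext (fun N => c * PO w N + \sum_(cw <- cws) cw.1 * PO cw.2 N)).
  by move=> N; rewrite big_cons.
apply: Pstep; first by apply: (adm (c, w)); left.
by apply: IH => cw h; apply: adm; right.
Qed.

Definition lmul (L M : letter R) := Letter (lsigma L * lsigma M) (lfactors L ++ lfactors M).

Lemma lv_mul L M n : lv (lmul L M) n = lv L n * lv M n.
Proof. rewrite /letter_val /= big_cat /= exprMn; ring. Qed.

Lemma lmul_adm {L M} : letter_adm L -> letter_adm M -> letter_adm (lmul L M).
Proof. by move=> hL hM rp /In_cat [/hL|/hM]. Qed.

Lemma PO_cons L w N : PO (L :: w) N = \sum_(1 <= n < N.+1) lv L n * PO w n.-1.
Proof. by []. Qed.

Lemma PO_cons_succ L w N : PO (L :: w) N.+1 = PO (L :: w) N + lv L N.+1 * PO w N.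
Proof. by rewrite !PO_cons big_nat_recr. Qed.

Lemma Sp_sumL {f L} : Sp f -> letter_adm L ->
  Sp (fun N => \sum_(1 <= n < N.+1) lv L n * f n.-1).
Proof.
move=> Sf HL; move: f Sf; apply: Sp_ind.
- move=> f g e Sf; apply: (Sp_ext Sf) => N; apply: eq_bigr => n _; by rewrite e.
- apply: (Sp_ext Sp0) => N; rewrite big1 // => n _; by rewrite mulr0.
- move=> f c w Hw Sf.
  have hw : word_adm (L :: w) by move=> M [<-|]; [exact: HL| exact: Hw].
  apply: (Sp_ext (SpD (SpZ c (SpPO hw)) Sf)) => N.
  rewrite PO_cons mulr_sumr -big_split; apply: eq_bigr => n _ /=; ring.
Qed.

Lemma sum_recr (F : nat -> C) N :
  \sum_(1 <= n < N.+2) F n = \sum_(1 <= n < N.+1) F n + F N.+1.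
Proof. by rewrite big_nat_recr. Qed.

Lemma stuffle a A b B N : PO (a :: A) N * PO (b :: B) N =
  \sum_(1 <= n < N.+1) lv a n * (PO A n.-1 * PO (b :: B) n.-1) +
  \sum_(1 <= n < N.+1) lv b n * (PO (a :: A) n.-1 * PO B n.-1) +
  \sum_(1 <= n < N.+1) lv (lmul a b) n * (PO A n.-1 * PO B n.-1).
Proof.
elim: N => [|N IH]; first by rewrite !PO_cons !big_geq // mulr0 !addr0.
rewrite (PO_cons_succ a A N) (PO_cons_succ b B N).
rewrite !sum_recr lv_mul.
move: IH.
move: (PO (a :: A) N) (PO (b :: B) N) => P Q IH.
move: IH; set S1 := \sum_(_ <= _ < _) _; set S2 := \sum_(_ <= _ < _) _;
  set S3 := \sum_(_ <= _ < _) _ => IH.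
have -> : S1 = P * Q - S2 - S3 by rewrite IH; ring.
ring.
Qed.

Lemma SpPOPO {A B} : word_adm A -> word_adm B -> Sp (fun N => PO A N * PO B N).
Proof.
elim: A B => [|a A IHA] B hA hB.
  by apply: (Sp_ext (SpPO hB)) => N; rewrite /= mul1r.
have ha : letter_adm a by apply: hA; left.
have hA' : word_adm A by move=> M h; apply: hA; right.
elim: B hB => [|b B IHB] hB.
  by apply: (Sp_ext (SpPO hA)) => N; rewrite [PO [::] N]/= mulr1.
have hb : letter_adm b by apply: hB; left.
have hB' : word_adm B by move=> M h; apply: hB; right.
have S1 := Sp_sumL (IHA (b :: B) hA' hB) ha.
have S2 := Sp_sumL (IHB hB') hb.
have S3 := Sp_sumL (IHA B hA' hB') (lmul_adm ha hb).
apply: (Sp_ext (SpD (SpD S1 S2) S3)) => N.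
by rewrite stuffle.
Qed.

Lemma SpM {f g} : Sp f -> Sp g -> Sp (fun N => f N * g N).
Proof.
move=> Sf Sg; move: f Sf; apply: Sp_ind.
- move=> f h e Sf; apply: (Sp_ext Sf) => N; by rewrite e.
- apply: (Sp_ext Sp0) => N; by rewrite mul0r.
- move=> f c w Hw Sf.
  have Sw : Sp (fun N => PO w N * g N).
    clear Sf; move: g Sg; apply: Sp_ind.
    + move=> g h e Sg; apply: (Sp_ext Sg) => N; by rewrite e.
    + apply: (Sp_ext Sp0) => N; by rewrite mulr0.
    + move=> g c' w' Hw' Sg.
      apply: (Sp_ext (SpD (SpZ c' (SpPOPO Hw Hw')) Sg)) => N; ring.
  apply: (Sp_ext (SpD (SpZ c Sw) Sf)) => N; ring.
Qed.

Lemma SpX {f} e : Sp f -> Sp (fun N => f N ^+ e).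
Proof.
move=> Sf; elim: e => [|e IH].
  by apply: (Sp_ext Sp1) => N; rewrite expr0.
by apply: (Sp_ext (SpM Sf IH)) => N; rewrite exprS.
Qed.

Lemma Sp_sumL0 {f L} : Sp f -> letter_adm L ->
  Sp (fun N => \sum_(1 <= n < N.+1) lv L n * f n).
Proof.
move=> Sf HL; move: f Sf; apply: Sp_ind.
- move=> f g e Sf; apply: (Sp_ext Sf) => N; apply: eq_bigr => n _; by rewrite e.
- apply: (Sp_ext Sp0) => N; rewrite big1 // => n _; by rewrite mulr0.
- move=> f c w Hw Sf.
  have Sw : Sp (fun N => \sum_(1 <= n < N.+1) lv L n * PO w n).
    case: w Hw => [|b w'] Hw.
      have hw : word_adm [:: L] by move=> M [<-|[]].
      by apply: (Sp_ext (SpPO hw)).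
    have hb : letter_adm b by apply: Hw; left.
    have hw' : word_adm w' by move=> M h; apply: Hw; right.
    have h1 : word_adm [:: L, b & w'] by move=> M [<-|]; [exact: HL|exact: Hw].
    have h2 : word_adm (lmul L b :: w') by move=> M [<-|]; [exact: lmul_adm|exact: hw'].
    apply: (Sp_ext (SpD (SpPO h1) (SpPO h2))) => N.
    rewrite (PO_cons L) (PO_cons (lmul L b)) -big_split.
    apply: eq_big_nat => n /andP [h _]; case: n h => // m _.
    by rewrite PO_cons_succ lv_mul /=; ring.
  apply: (Sp_ext (SpD (SpZ c Sw) Sf)) => N.
  rewrite mulr_sumr -big_split; apply: eq_bigr => n _ /=; ring.
Qed.

Definition good (G : nat -> C) := exists L h, letter_adm L /\ Sp h /\ forall n, G n = lv L n * h n.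

Lemma Sp_nested Gs : (forall G, List.In G Gs -> good G) -> Sp (nested_sum Gs).
Proof.
elim: Gs => [|G Gs IH] H; first by apply: (Sp_ext Sp1).
have [L [h [hL [Sh Eh]]]] := H G (or_introl erefl).
have S := Sp_sumL0 (SpM Sh (IH (fun G' h' => H G' (or_intror h')))) hL.
apply: (Sp_ext S) => N /=; apply: eq_bigr => n _; by rewrite Eh mulrA.
Qed.

Lemma Sp_prodPO (ws : seq (word R * nat)) : (forall we, List.In we ws -> word_adm we.1) ->
  Sp (fun n => \prod_(we <- ws) PO we.1 n ^+ we.2).
Proof.
elim: ws => [|[w e] ws IH] H.
  by apply: (Sp_ext Sp1) => N; rewrite big_nil.
have hw : word_adm w by apply: (H (w, e)); left.
have S := SpM (SpX e (SpPO hw)) (IH (fun we h => H we (or_intror h))).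
by apply: (Sp_ext S) => N; rewrite big_cons.
Qed.

Lemma factor_good {F} : factor_adm F -> good (factor_val Lg F).
Proof.
move=> [h1 h2].
exists (Letter (fz F) [seq (- qp.1, qp.2) | qp <- fpolys F]).
exists (fun n => \prod_(we <- fwords F) PO we.1 n ^+ we.2).
split; first by move=> rp /In_map' [qp [hq ->]]; exact: (h1 qp hq).
split; first exact: Sp_prodPO.
move=> n; rewrite /factor_val /letter_val /= big_map.
congr (_ * _ * _); apply: eq_bigr => qp _; by rewrite opprK.
Qed.

End H.

Theorem corollary7p5 (R : realType) (Lg : R[i] -> R[i]) (hLg : is_log_branch Lg)
  (Fs : seq (sfactor R)) (hFs : forall F, List.In F Fs -> factor_adm F) :
  exists cws : seq (R[i] * word R),
    (forall cw, List.In cw cws -> word_adm cw.2) /\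
    forall k : nat, (0 < k)%N ->
      iterated_sum Lg Fs k = \sum_(cw <- cws) cw.1 * PO Lg cw.2 k.
Proof.
have S : Sp R Lg (iterated_sum Lg Fs).
  apply: Sp_nested => G /In_rev /In_map' [F [hF ->]].
  exact: (@factor_good R Lg F (hFs F hF)).
case: S => cws [h1 h2]; exists cws; split => // k _; exact: h2.
Qed.
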